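(* Let $\mathcal H$ be a finite multi-sorted relational structure and $p$ a prime. Then, up to isomorphism, there exists a unique $p$-rigid multi-sorted structure $\mathcal H^{*p}$ such that $\mathcal H\rightarrow_p^*\mathcal H^{*p}$.
   Context: A multi-sorted relational structure $\mathcal H$ over sorts $[k]$ consists of pairwise disjoint finite sets $H_1,\dots,H_k$ and finitely many relations, each relation symbol $\mathcal R$ having an arity $\ell$ and a type $(i_1,\dots,i_\ell)\in[k]^\ell$, interpreted as a subset of $H_{i_1}\times\dots\times H_{i_\ell}$. Similar structures have the same signature and types. A homomorphism $\varphi=\{\varphi_i\}_{i\in[k]}$, $\varphi_i:G_i\to H_i$, maps every tuple of each relation of $\mathcal G$ to a tuple of the corresponding relation of $\mathcal H$ (applying $\varphi_{i_j}$ in coordinate $j$); isomorphisms and automorphisms are defined as usual (bijective with homomorphic inverse). An automorphism $\pi=\{\pi_i\}$ has order $p$ if each $\pi_i$ is the identity or has order $p$, and at least one $\pi_i$ is not the identity. $\mathcal H$ is $p$-rigid if it has no automorphism of order $p$. For an automorphism $\pi$, $\mathcal H^\pi$ is the substructure of $\mathcal H$ induced by the sets $\mathrm{Fix}(\pi_i)=\{a\in H_i:\pi_i(a)=a\}$ (each relation intersected with the product of the fixed-point sets of the corresponding sorts). Write $\mathcal H\rightarrow_p\mathcal H'$ if there is an automorphism $\pi$ of $\mathcal H$ of order $p$ with $\mathcal H'\cong\mathcal H^\pi$, and $\mathcal H\rightarrow_p^*\mathcal H'$ if there are structures $\mathcal H_1\cong\mathcal H,\ \mathcal H_t\cong\mathcal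 H'$ with $\mathcal H_1\rightarrow_p\mathcal H_2\rightarrow_p\dots\rightarrow_p\mathcal H_t$. *)

(* Defs.v *)
From mathcomp Require Import all_boot.
Set Implicit Arguments. Unset Strict Implicit. Unset Printing Implicit Defensive.

Record signature := Sig {
  nsorts : nat;
  nrels : nat;
  arity : 'I_nrels -> nat;
  rtype : forall r : 'I_nrels, 'I_(arity r) -> 'I_nsorts }.

(* A finite multi-sorted structure: one finite carrier per sort (carriers of
   different sorts are distinct types, hence disjoint), and for each relation
   symbol r a subset of H_{i_1} x ... x H_{i_l} (tuples are finite dependent
   functions, so equality of tuples is extensional). *)
Record mstruct (S : signature) := MStruct {
  carrier : 'I_(nsorts S) -> finType;
  rel : forall r : 'I_(nrels S),
        pred {ffun forall j : 'I_(arity r), carrier (rtype j)} }.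

Section Defs.
Variable S : signature.

Definition sfun (G H : mstruct S) :=
  forall i : 'I_(nsorts S), carrier G i -> carrier H i.

Definition map_tuple (G H : mstruct S) (phi : sfun G H) (r : 'I_(nrels S))
  (t : {ffun forall j : 'I_(arity r), carrier G (rtype j)}) :
  {ffun forall j : 'I_(arity r), carrier H (rtype j)} :=
  [ffun j => phi (rtype j) (t j)].

Definition is_hom (G H : mstruct S) (phi : sfun G H) : Prop :=
  forall (r : 'I_(nrels S)) (t : {ffun forall j : 'I_(arity r), carrier G (rtype j)}),
    rel t -> rel (map_tuple phi t).

Definition is_iso (G H : mstruct S) (phi : sfun G H) : Prop :=
  exists psi : sfun H G,
    [/\ forall i, cancel (phi i) (psi i), forall i, cancel (psi i) (phi i),
        is_hom phi & is_hom psi].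

Definition isomorphic (G H : mstruct S) : Prop :=
  exists phi : sfun G H, is_iso phi.

Definition is_auto (H : mstruct S) (pi : sfun H H) : Prop := is_iso pi.

Definition has_order (T : Type) (f : T -> T) (n : nat) : Prop :=
  0 < n /\ (forall x, iter n f x = x) /\
  (forall m, 0 < m < n -> ~ (forall x, iter m f x = x)).

Definition auto_of_order (p : nat) (H : mstruct S) (pi : sfun H H) : Prop :=
  [/\ is_auto pi,
      forall i, (forall x, pi i x = x) \/ has_order (pi i) p
    & exists i, ~ (forall x, pi i x = x)].

Definition p_rigid (p : nat) (H : mstruct S) : Prop :=
  forall pi : sfun H H, ~ auto_of_order p pi.

Definition fix_carrier (H : mstruct S) (pi : sfun H H) (i : 'I_(nsorts S))
  : finType := {x : carrier H i | pi i x == x}.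

Definition fix_struct (H : mstruct S) (pi : sfun H H) : mstruct S :=
  @MStruct S (fix_carrier pi)
    (fun r (t : {ffun forall j : 'I_(arity r), fix_carrier pi (rtype j)}) =>
       rel ([ffun j => val (t j)] :
              {ffun forall j : 'I_(arity r), carrier H (rtype j)})).

Definition pstep (p : nat) (H H' : mstruct S) : Prop :=
  exists pi : sfun H H, auto_of_order p pi /\ isomorphic H' (fix_struct pi).

Inductive pchain (p : nat) : mstruct S -> mstruct S -> Prop :=
  | pchain_refl H : pchain p H H
  | pchain_step H1 H2 H3 : pstep p H1 H2 -> pchain p H2 H3 -> pchain p H1 H3.

Definition pstar (p : nat) (H H' : mstruct S) : Prop :=
  exists H1 Ht, [/\ isomorphic H1 H, isomorphic Ht H' & pchain p H1 Ht].

End Defs.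

(* Main.v *)
Require Import Defs.
From Stdlib Require Import Classical.
From mathcomp Require Import all_boot all_fingroup all_solvable.
Import Defs.
Notation mrel := Defs.rel.
Notation mtup := Defs.map_tuple.
Set Implicit Arguments. Unset Strict Implicit. Unset Printing Implicit Defensive.

Lemma card_fix_mod (T : finType) (A : {set T}) (f : T -> T) (p : nat) :
  prime p -> injective f -> (forall x, iter p f x = x) ->
  (forall x, x \in A -> f x \in A) ->
  #|A| = #|[set x in A | f x == x]| %[mod p].
Proof.
move=> pp injf fp fA.
pose s := perm injf.
have sp : #[s]%g %| p.
  rewrite order_dvdn; apply/eqP/permP=> x; rewrite permX perm1.
  by rewrite (eq_iter (permE injf)).
have pG : (p.-group <[s]>)%g.
  by rewrite /pgroup -orderE (pnat_dvd sp) ?pnat_id.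
have itA : forall n x, x \in A -> iter n f x \in A.
  by elim=> [|n IH] x xA //=; apply/fA/IH.
have acts : [acts <[s]>%g, on A | 'P].
  rewrite cycle_subG; apply/astabsP=> x /=; rewrite /aperm permE.
  apply/idP/idP; last exact: fA.
  move=> fxA; rewrite -(fp x) -(prednK (prime_gt0 pp)) iterSr; exact: itA.
rewrite (pgroup_fix_mod pG acts) afix_cycle.
congr (_ %% _); apply: eq_card=> x; rewrite !inE.
congr (_ && _); rewrite sub1set inE; apply: (congr1 (fun y => y == x)); exact: permE.
Qed.
Lemma iter_order (T : finType) (f : T -> T) (p : nat) :
  prime p -> injective f -> (forall x, iter p f x = x) ->
  (forall x, f x = x) \/ has_order f p.
Proof.
move=> pp injf fp.
pose s := perm injf.
have iterE : forall n x, (s ^+ n)%g x = iter n f x.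
  by move=> n x; rewrite permX (eq_iter (permE injf)).
have sp : #[s]%g %| p.
  by rewrite order_dvdn; apply/eqP/permP=> x; rewrite iterE perm1.
have [o1|op] : #[s]%g = 1 \/ #[s]%g = p.
  have [->|n1] := eqVneq #[s]%g 1; first by left.
  by right; apply/(prime_nt_dvdP pp n1).
- left=> x; move/eqP: o1; rewrite order_eq1 => /eqP s1.
  by rewrite -(permE injf) -/s s1 perm1.
- right; split; first exact: prime_gt0.
  split=> // m /andP[m0 mp] hm.
  have : #[s]%g %| m.
    by rewrite order_dvdn; apply/eqP/permP=> x; rewrite iterE perm1 hm.
  by rewrite op => /(dvdn_leq m0); rewrite leqNgt mp.
Qed.
Definition tupT (S : signature) (G : mstruct S) (r : 'I_(nrels S)) :=
  {dffun forall j : 'I_(arity r), carrier G (rtype j)}.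

Definition homT (S : signature) (G K : mstruct S) :=
  {dffun forall i : 'I_(nsorts S), {ffun carrier G i -> carrier K i}}.

Definition hsf (S : signature) (G K : mstruct S) (f : homT G K) : sfun G K :=
  fun i x => f i x.

Definition homb (S : signature) (G K : mstruct S) (f : homT G K) : bool :=
  [forall r : 'I_(nrels S), [forall t : tupT G r,
      mrel t ==> mrel (mtup (hsf f) t)]].

Definition injhomb (S : signature) (G K : mstruct S) (f : homT G K) : bool :=
  [forall i, injectiveb (f i)] && homb f.

Definition ninj (S : signature) (G K : mstruct S) :=
  #|[set f : homT G K | injhomb f]|.

Definition hcomp (S : signature) (G K K' : mstruct S) (phi : sfun K K') (f : homT G K)
  : homT G K' := [ffun i => [ffun x => phi i (f i x)]].

Definition ofsf (S : signature) (G K : mstruct S) (phi : sfun G K) : homT G K :=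
  [ffun i => [ffun x => phi i x]].

Lemma hombP (S : signature) (G K : mstruct S) (f : homT G K) :
  reflect (is_hom (hsf f)) (homb f).
Proof.
apply: (iffP forallP) => [h r t rt | h r].
  by have := forallP (h r) t; rewrite rt.
by apply/forallP=> t; apply/implyP; apply: h.
Qed.

Lemma injhombP (S : signature) (G K : mstruct S) (f : homT G K) :
  reflect ((forall i, injective (f i)) /\ is_hom (hsf f)) (injhomb f).
Proof.
apply: (iffP andP) => [[/forallP hi /hombP hh]|[hi hh]].
  split=> [i|//]; exact: (elimT (injectiveP _) (hi i)).
split; [apply/forallP=> i; exact: (introT (injectiveP _) (hi i))|exact/hombP].
Qed.

Lemma hcompE (S : signature) (G K K' : mstruct S) (phi : sfun K K') (f : homT G K) i x :
  hcomp phi f i x = phi i (f i x).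
Proof. by rewrite /hcomp !ffunE. Qed.

Lemma ofsfE (S : signature) (G K : mstruct S) (phi : sfun G K) i x : ofsf phi i x = phi i x.
Proof. by rewrite /ofsf !ffunE. Qed.

Lemma map_tuple_comp (S : signature) (G K K' : mstruct S) (phi : sfun K K') (psi : sfun G K) r t :
  mtup phi (mtup psi t) = mtup (fun i x => phi i (psi i x)) t :> {ffun forall j : 'I_(arity r), carrier K' (rtype j)}.
Proof. by apply/ffunP=> j; rewrite !ffunE. Qed.

Lemma is_hom_comp (S : signature) (G K K' : mstruct S) (phi : sfun K K') (psi : sfun G K) :
  is_hom phi -> is_hom psi -> is_hom (fun i x => phi i (psi i x)).
Proof. by move=> hp hq r t rt; rewrite -map_tuple_comp; apply/hp/hq. Qed.

Lemma is_hom_ext (S : signature) (G K : mstruct S) (phi psi : sfun G K) :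
  (forall i x, phi i x = psi i x) -> is_hom phi -> is_hom psi.
Proof.
move=> e hp r t rt; have -> : mtup psi t = mtup phi t.
  by apply/ffunP=> j; rewrite !ffunE e.
exact: hp.
Qed.

Lemma injhomb_comp (S : signature) (G K K' : mstruct S) (phi : sfun K K') (f : homT G K) :
  (forall i, injective (phi i)) -> is_hom phi -> injhomb f -> injhomb (hcomp phi f).
Proof.
move=> ip hp /injhombP[fi fh]; apply/injhombP; split.
  by move=> i x y; rewrite !hcompE => /ip /fi.
apply: is_hom_ext (is_hom_comp hp fh) => i x; by rewrite /hsf hcompE.
Qed.

Lemma mtup_inj (S : signature) (G K : mstruct S) (phi : sfun G K) r :
  (forall i, injective (phi i)) ->
  injective (fun t : tupT G r => (mtup phi t : tupT K r)).
Proof.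
move=> ip t1 t2 /= e; apply/ffunP=> j; apply: (ip (rtype j)).
by move/ffunP: e => /(_ j); rewrite !ffunE.
Qed.

Lemma endo_iso (S : signature) (K : mstruct S) (phi : sfun K K) :
  (forall i, injective (phi i)) -> is_hom phi -> is_iso phi.
Proof.
move=> ip hp; exists (fun i => invF (ip i)); split.
- by move=> i; apply: invF_f.
- by move=> i; apply: f_invF.
- exact: hp.
move=> r t' rt'.
pose M := fun t : tupT K r => (mtup phi t : tupT K r).
pose R := [set t : tupT K r | mrel t].
have sub : M @: R \subset R.
  by apply/subsetP=> u /imsetP[t]; rewrite !inE => rt ->; apply: hp.
have eqc : #|M @: R| = #|R| by rewrite card_imset //; apply: mtup_inj.
have : t' \in M @: R by rewrite (subset_cardP eqc sub) inE.
case/imsetP=> t; rewrite inE => rt ->.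
have -> : mtup (fun i => invF (ip i)) (M t) = t.
  by apply/ffunP=> j; rewrite /M !ffunE invF_f.
exact: rt.
Qed.

Lemma ninj_le (S : signature) (G K K' : mstruct S) (phi : sfun K K') :
  (forall i, injective (phi i)) -> is_hom phi -> ninj G K <= ninj G K'.
Proof.
move=> ip hp; rewrite /ninj -(card_in_imset (f := hcomp phi)).
  apply: subset_leq_card; apply/subsetP=> g /imsetP[f]; rewrite !inE => hf ->.
  exact: injhomb_comp.
move=> f g _ _ e; apply/ffunP=> i; apply/ffunP=> x; apply: (ip i).
by rewrite -!hcompE e.
Qed.

Lemma iso_inj (S : signature) (G K : mstruct S) (phi : sfun G K) :
  is_iso phi -> (forall i, injective (phi i)) /\ is_hom phi.
Proof. by case=> psi [c1 c2 h1 h2]; split=> // i; apply: can_inj (c1 i). Qed.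

Lemma iso_sym (S : signature) (G K : mstruct S) : isomorphic G K -> isomorphic K G.
Proof. by case=> phi [psi [c1 c2 h1 h2]]; exists psi; exists phi; split. Qed.

Lemma iso_refl (S : signature) (G : mstruct S) : isomorphic G G.
Proof.
exists (fun i x => x); exists (fun i x => x); split=> // r t rt;
  (have -> : mtup (fun i (x : carrier G i) => x) t = t by apply/ffunP=> j; rewrite ffunE); exact: rt.
Qed.

Lemma ninj_iso (S : signature) (G K K' : mstruct S) :
  isomorphic K K' -> ninj G K = ninj G K'.
Proof.
move=> iso; apply/eqP; rewrite eqn_leq.
case: iso => phi /[dup] /iso_inj[ip hp] [psi [c1 c2 h1 h2]].
rewrite (ninj_le G ip hp) /=.
by apply: (@ninj_le _ G _ _ psi) => // i; apply: can_inj (c2 i).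
Qed.

Lemma iter_hcomp (S : signature) (G K : mstruct S) (pi : sfun K K) n (f : homT G K) i x :
  iter n (hcomp pi) f i x = iter n (pi i) (f i x).
Proof. by elim: n => //= n IH; rewrite hcompE IH. Qed.

Lemma auto_iter (S : signature) (K : mstruct S) p (pi : sfun K K) :
  auto_of_order p pi -> forall i x, iter p (pi i) x = x.
Proof.
case=> _ h _ i x; case: (h i) => [id|[_ [-> _]]] //.
by elim: p {h} => //= n ->.
Qed.

Lemma ninj_step (S : signature) (G K : mstruct S) p (pi : sfun K K) :
  prime p -> auto_of_order p pi ->
  ninj G K = ninj G (fix_struct pi) %[mod p].
Proof.
move=> pp ao.
have [ip hp] : (forall i, injective (pi i)) /\ is_hom pi by case: ao => /iso_inj.
rewrite /ninj (card_fix_mod (f := hcomp pi) pp).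
- congr (_ %% _).
  pose lift := @hcomp _ G (fix_struct pi) K (fun i (y : carrier (fix_struct pi) i) => val (y : fix_carrier pi i)).
  have linj : injective lift.
    move=> f g e; apply/ffunP=> i; apply/ffunP=> x; apply: val_inj.
    by move/(congr1 (fun h : homT G K => h i x)): e; rewrite /lift !hcompE.
  rewrite -(card_imset _ linj); apply: eq_card => f; rewrite !inE.
  apply/andP/imsetP.
  + case=> /injhombP[fi fh] /eqP fe.
    have H : forall i x, pi i (f i x) == f i x.
      by move=> i x; rewrite -[X in _ == X](congr1 (fun g : homT G K => g i x) fe) hcompE.
    pose g : homT G (fix_struct pi) :=
      [ffun i => [ffun x => (exist _ (f i x) (H i x) : fix_carrier pi i)]].
    have lg : lift g = f by apply/ffunP=> i; apply/ffunP=> x; rewrite hcompE !ffunE.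
    exists g => //; rewrite inE; apply/injhombP; split.
      by move=> i x y; rewrite /g !ffunE => /(congr1 val) /= /fi.
    move=> r t rt /=.
    have -> : [ffun j => val (mtup (hsf g) t j)] = mtup (hsf f) t.
      by apply/ffunP=> j; rewrite !ffunE /hsf /g !ffunE.
    exact: fh.
  + case=> g; rewrite inE => hg ->; split.
      apply: injhomb_comp hg => //; first by move=> i x y /val_inj.
    apply/eqP; apply/ffunP=> i; apply/ffunP=> x; rewrite !hcompE.
    exact/eqP/(valP (g i x)).
- by move=> f g e; apply/ffunP=> i; apply/ffunP=> x; apply: (ip i); rewrite -!hcompE e.
- move=> f; apply/ffunP=> i; apply/ffunP=> x; rewrite iter_hcomp.
  exact: (auto_iter ao).
- by move=> f; rewrite !inE; apply: injhomb_comp.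
Qed.

Lemma ninj_chain (S : signature) p (A B : mstruct S) :
  prime p -> pchain p A B -> forall G, ninj G A = ninj G B %[mod p].
Proof.
move=> pp; elim=> // H1 H2 H3 [pi [ao iso]] _ IH G.
by rewrite (ninj_step G pp ao) -(ninj_iso G iso) IH.
Qed.

Lemma ninj_pstar (S : signature) p (A B : mstruct S) :
  prime p -> pstar p A B -> forall G, ninj G A = ninj G B %[mod p].
Proof.
move=> pp [H1 [Ht [i1 it ch]]] G.
by rewrite -(ninj_iso G i1) (ninj_chain pp ch) (ninj_iso G it).
Qed.

Lemma tagged_asK (I : eqType) (T_ : I -> Type) (u v : {i : I & T_ i}) :
  tag v = tag u -> v = Tagged T_ (tagged_as u v).
Proof. by case: u => i x; case: v => j y /= e; subst j; rewrite tagged_asE. Qed.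

Lemma tagged_asK' (I : eqType) (T_ : I -> Type) (i : I) (x : T_ i) (v : {i : I & T_ i}) :
  tag v = i -> v = Tagged T_ (tagged_as (Tagged T_ x) v).
Proof. by case: v => j y /= e; subst j; rewrite tagged_asE. Qed.

Lemma rigid_ndvd (S : signature) (K : mstruct S) p :
  prime p -> p_rigid p K -> ~~ (p %| ninj K K).
Proof.
move=> pp rig; apply/negP => dv.
pose T := {i : 'I_(nsorts S) & carrier K i}.
pose G2F (s : {perm T}) : homT K K :=
  [ffun i : 'I_(nsorts S) => [ffun x : carrier K i => tagged_as (Tagged (fun i : 'I_(nsorts S) => Finite.sort (carrier K i)) x) (s (Tagged (fun i : 'I_(nsorts S) => Finite.sort (carrier K i)) x))]].
pose tp (s : {perm T}) := [forall u, tag (s u) == tag u].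
pose A := [set s : {perm T} | tp s && injhomb (G2F s)].
have sE : forall s, tp s -> forall i x, s (Tagged (fun i : 'I_(nsorts S) => Finite.sort (carrier K i)) x) = Tagged (fun i : 'I_(nsorts S) => Finite.sort (carrier K i)) (G2F s i x).
  move=> s /forallP ts i x; rewrite /G2F !ffunE; apply: tagged_asK'.
  exact/eqP/ts.
have tp1 : tp 1%g by apply/forallP=> u; rewrite perm1.
have tpM : forall s t, tp s -> tp t -> tp (s * t)%g.
  by move=> s t /forallP ts /forallP tt; apply/forallP=> u; rewrite permM (eqP (tt _)) ts.
have G2F1 : forall i x, G2F 1%g i x = x.
  by move=> i x; rewrite /G2F !ffunE perm1 tagged_asE.
have G2FM : forall s t, tp s -> tp t -> forall i x, G2F (s * t)%g i x = G2F t i (G2F s i x).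
  move=> s t ts tt i x; apply: (@eq_from_Tagged _ (fun i : 'I_(nsorts S) => Finite.sort (carrier K i))).
Unset Printing All.   by rewrite -sE ?tpM // permM sE // sE.
have gA : group_set A.
  apply/group_setP; split.
    rewrite inE tp1 /=; apply/injhombP; split.
      by move=> i x y; rewrite !G2F1.
    move=> r t rt; have -> : mtup (hsf (G2F 1%g)) t = t.
      by apply/ffunP=> j; rewrite ffunE /hsf G2F1.
    exact: rt.
  move=> s t; rewrite !inE => /andP[ts hs] /andP[tt ht]; rewrite tpM //=.
  have -> : G2F (s * t)%g = hcomp (hsf (G2F t)) (G2F s).
    by apply/ffunP=> i; apply/ffunP=> x; rewrite hcompE G2FM.
  by case/injhombP: ht => it ht; apply: injhomb_comp.
pose GA := Group gA.
have cardA : #|GA| = ninj K K.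
  rewrite /ninj -(card_in_imset (f := G2F)).
    apply: eq_card => f; rewrite [in RHS]inE; apply/imsetP/idP.
      by case=> s; rewrite inE => /andP[_ h] ->.
    move=> hf; case/injhombP: (hf) => fi fh.
    pose F := fun u : T => Tagged (fun i : 'I_(nsorts S) => Finite.sort (carrier K i)) (f (tag u) (tagged u)).
    have Finj : injective F.
      move=> [i x] [j y]; rewrite /F /= => e.
      have eij : i = j by move/(congr1 tag): e.
      subst j; apply/eqP; rewrite eq_Tagged; apply/eqP; apply: (fi i).
      exact: (@eq_from_Tagged _ (fun i : 'I_(nsorts S) => Finite.sort (carrier K i))).
    pose s := perm Finj.
    have ts : tp s by apply/forallP=> u; rewrite permE.
    have Gs : G2F s = f.
      apply/ffunP=> i; apply/ffunP=> x; apply: (@eq_from_Tagged _ (fun i : 'I_(nsorts S) => Finite.sort (carrier K i))).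
      by rewrite -sE // permE.
    by exists s; rewrite // inE ts Gs.
  move=> s t; rewrite !inE => /andP[ts _] /andP[tt _] e.
  apply/permP=> -[i x]; by rewrite !sE // e.
have [s As os] := Cauchy (G := GA) pp (etrans (congr1 _ cardA) dv).
move: As; rewrite inE => /andP[ts hs].
case/injhombP: (hs) => si sh.
have itE : forall n i x, iter n s (Tagged (fun i : 'I_(nsorts S) => Finite.sort (carrier K i)) x) = Tagged (fun i : 'I_(nsorts S) => Finite.sort (carrier K i)) (iter n (G2F s i) x).
  by elim=> // n IH i x /=; rewrite IH sE.
apply: (rig (hsf (G2F s))); split.
- exact: endo_iso.
- move=> i; apply: iter_order pp (si i) _ => x.
  apply: (@eq_from_Tagged _ (fun i : 'I_(nsorts S) => Finite.sort (carrier K i))); rewrite /hsf -itE -permX.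
  by rewrite -os expg_order perm1.
case: (boolP [exists i, [exists x, G2F s i x != x]]) => [/existsP[i /existsP[x nx]]|H].
  by exists i => h; move: nx; have := h x; rewrite /hsf => ->; rewrite eqxx.
exfalso; have s1 : s = 1%g.
  apply/permP => -[i x]; rewrite sE // perm1; congr Tagged.
  move: H; rewrite negb_exists => /forallP/(_ i); rewrite negb_exists => /forallP/(_ x).
  by rewrite negbK => /eqP.
by move: os pp; rewrite s1 order1 => <-.
Qed.

Lemma ninj_gt0 (S : signature) (G K : mstruct S) :
  0 < ninj G K -> exists f : homT G K, injhomb f.
Proof. by rewrite /ninj card_gt0 => /set0Pn[f]; rewrite inE; exists f. Qed.

Lemma inj_both_iso (S : signature) (K1 K2 : mstruct S) (f : homT K1 K2) (g : homT K2 K1) :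
  injhomb f -> injhomb g -> isomorphic K1 K2.
Proof.
move=> /injhombP[fi fh] /injhombP[gi gh].
have [h [c1 c2 _ hh]] : is_iso (fun i x => g i (f i x)).
  apply: endo_iso; first by move=> i x y /gi /fi.
  exact: is_hom_comp gh fh.
have [k [d1 d2 _ _]] : is_iso (fun i y => f i (g i y)).
  apply: endo_iso; first by move=> i x y /fi /gi.
  exact: is_hom_comp fh gh.
exists (hsf f); exists (fun i y => h i (g i y)); split.
- by move=> i x; rewrite /hsf c1.
- move=> i y; rewrite /hsf -[y](d2 i) /=.
  by rewrite (c1 i (g i (k i y))).
- exact: fh.
- exact: is_hom_comp hh gh.
Qed.

Lemma rigid_unique (S : signature) (K1 K2 : mstruct S) p :
  prime p -> p_rigid p K1 -> p_rigid p K2 ->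
  (forall G, ninj G K1 = ninj G K2 %[mod p]) -> isomorphic K1 K2.
Proof.
move=> pp r1 r2 e.
have pos : forall A B : mstruct S, p_rigid p A ->
    ninj A A = ninj A B %[mod p] -> exists f : homT A B, injhomb f.
  move=> A B rA eAB; apply: ninj_gt0; rewrite lt0n; apply/negP => /eqP z.
  move: eAB; rewrite z mod0n => /eqP; rewrite -/(dvdn p _) => dv.
  by move: (rigid_ndvd pp rA); rewrite dv.
have [f hf] := pos _ _ r1 (e K1).
have [g hg] := pos _ _ r2 (esym (e K2)).
exact: inj_both_iso hf hg.
Qed.

Definition msize (S : signature) (H : mstruct S) := \sum_(i < nsorts S) #|carrier H i|.

Lemma fix_smaller (S : signature) (H : mstruct S) p (pi : sfun H H) :
  auto_of_order p pi -> msize (fix_struct pi) < msize H.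
Proof.
case=> _ _ [i0 ni0].
have le : forall i, #|fix_carrier pi i| <= #|carrier H i|.
  by move=> i; rewrite /fix_carrier card_sig max_card.
have lt : #|fix_carrier pi i0| < #|carrier H i0|.
  rewrite /fix_carrier card_sig -(cardC [pred x | pi i0 x == x]) -addn1 leq_add2l.
  apply/card_gt0P; case: (boolP [exists x, pi i0 x != x]) => [/existsP[x nx]|H0].
    by exists x; rewrite !inE.
  exfalso; apply: ni0 => x; move: H0; rewrite negb_exists => /forallP/(_ x).
  by rewrite negbK => /eqP.
rewrite /msize (bigD1 i0) //= [X in _ < X](bigD1 i0) //=.
rewrite -addSn leq_add //; apply: leq_sum => i _; exact: le.
Qed.

Lemma exists_rigid (S : signature) p n (H : mstruct S) :
  msize H <= n -> exists Hs, p_rigid p Hs /\ pstar p H Hs.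
Proof.
elim: n H => [|n IH] H sz.
- exists H; split; last by exists H, H; split; [apply: iso_refl|apply: iso_refl|constructor].
  move=> pi [_ _ [i ni]]; apply: ni => x; exfalso.
  have : #|carrier H i| == 0.
    by rewrite -leqn0 (leq_trans _ sz) // /msize (bigD1 i) //= leq_addr.
  by move/eqP/card0_eq/(_ x); rewrite inE.
- case: (classic (p_rigid p H)) => [rH|nrH].
    by exists H; split; last by exists H, H; split; [apply: iso_refl|apply: iso_refl|constructor].
  have [pi ao] : exists pi : sfun H H, auto_of_order p pi.
    apply: NNPP => nx; apply: nrH => pi ao; apply: nx; by exists pi.
  have [Hs [rs [H1 [Ht [i1 it ch]]]]] := IH (fix_struct pi) (leq_trans (fix_smaller ao) sz).
  exists Hs; split => //; exists H, Ht; split=> //; first exact: iso_refl.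
  by apply: pchain_step ch; exists pi; split.
Qed.

Theorem proposition2p1 (S : signature) (H : mstruct S) (p : nat) :
  prime p ->
  exists Hs : mstruct S,
    [/\ p_rigid p Hs, pstar p H Hs &
        forall H' : mstruct S, p_rigid p H' -> pstar p H H' -> isomorphic H' Hs].
Proof.
move=> pp; have [Hs [rs ps]] := exists_rigid p (leqnn (msize H)).
exists Hs; split => // H' r' ps'.
apply: (rigid_unique pp r' rs) => G.
by rewrite -(ninj_pstar pp ps' G) (ninj_pstar pp ps G).
Qed.
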